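(* Let $n\in\mathbb N$, $\delta>0$, and let $d$ be a metric on $\mathbb R^n$ induced by a norm. Let $\{\mathcal D^n(\delta);\tilde w_1,\dots,\tilde w_N;p_1,\dots,p_N\}$ be a DIFS in which each $\tilde w_i$ is the $\delta$-roundoff of a contraction $w_i:\mathbb R^n\to\mathbb R^n$ on $(\mathbb R^n,d)$ with contractivity factor $\lambda_i\in[0,1)$ and fixed point $x_f^{(i)}$. Let $o\in\mathbb R^n$ be arbitrary, and put $r_{max}:=\max_i d(x_f^{(i)},o)$, $\lambda_{max}:=\max_i\lambda_i$, $\alpha:=\frac{1+\lambda_{max}}{1-\lambda_{max}}$ and $r:=\alpha r_{max}+\theta(1-\lambda_{max})^{-1}$. Then for every $\varepsilon>0$, the set $S=B(o,r+\varepsilon)\cap\mathcal D^n(\delta)$, where $B(o,\rho)$ is the open ball in $(\mathbb R^n,d)$ of center $o$ and radius $\rho$, satisfies $\tilde w_i(S)\subset S$ for every $i\in\{1,\dots,N\}$. Moreover, the set $\mathcal A$ of all recurrent states of the Markov chain associated with the DIFS is nonempty and $\mathcal A\subset S$.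
   Context: For $m=(m_1,\dots,m_n)\in\mathbb Z^n$ the $\delta$-cube is $C_\delta(m)=\prod_{j=1}^n[(m_j-\tfrac12)\delta,(m_j+\tfrac12)\delta)$; these cubes partition $\mathbb R^n$. The $\delta$-discretization is $\mathcal D^n(\delta)=\{\delta m:m\in\mathbb Z^n\}\subset\mathbb R^n$. The $\delta$-roundoff of $x\in\mathbb R^n$ is $\tilde x=\delta m$ where $x\in C_\delta(m)$; the $\delta$-roundoff of a map $w:\mathbb R^n\to\mathbb R^n$ is $\tilde w:\mathcal D^n(\delta)\to\mathcal D^n(\delta)$, $\tilde w(\tilde x)=\widetilde{w(\tilde x)}$. $\theta:=\tfrac12\operatorname{diam}_d(C_\delta(0))$. A DIFS (discrete IFS with place-dependent probabilities) $\{S;\tilde w_1,\dots,\tilde w_N;p_1,\dots,p_N\}$ consists of $S\subset\mathcal D^n(\delta)$, maps $\tilde w_i:S\to S$ and functions $p_i:S\to(0,1]$ with $\sum_i p_i(\tilde x)=1$ for all $\tilde x\in S$. Its associated Markov chain on $S$ has transition probabilities $P(\tilde x,\tilde y)=\sum_{i=1}^N p_i(\tilde x)\mathbf 1_{\{\tilde y\}}(\tilde w_i(\tilde x))$. A state $\tilde x$ is recurrent if the chain started at $\tilde x$ returns to $\tilde x$ in finitely many steps with probability $1$. *)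

(* Defs.v *)
From HB Require Import structures.
From mathcomp Require Import all_boot all_order all_algebra.
From mathcomp Require Import all_classical all_reals all_analysis.
Set Implicit Arguments. Unset Strict Implicit. Unset Printing Implicit Defensive.
Import Order.TTheory GRing.Theory Num.Theory numFieldNormedType.Exports.
Local Open Scope ring_scope.
Local Open Scope classical_set_scope.

Section DIFS.
Variables (R : realType) (n : nat).

(* nrm is a norm on R^n; the induced metric is d(x,y) = nrm (x - y). *)
Definition is_norm (nrm : 'rV[R]_n -> R) : Prop :=
  [/\ forall x, nrm x = 0 -> x = 0,
      forall (a : R) x, nrm (a *: x) = `|a| * nrm x
    & forall x y, nrm (x + y) <= nrm x + nrm y].

Definition ivec (m : 'rV[int]_n) : 'rV[R]_n := map_mx (fun z : int => z%:~R) m.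

Definition cube (delta : R) (m : 'rV[int]_n) : set 'rV[R]_n :=
  [set x | forall j, ((m 0 j)%:~R - 2^-1) * delta <= x 0 j
                     /\ x 0 j < ((m 0 j)%:~R + 2^-1) * delta].

Definition discretization (delta : R) : set 'rV[R]_n :=
  [set x | exists m : 'rV[int]_n, x = delta *: ivec m].

(* delta-roundoff of a point: delta*m where x lies in C_delta(m), i.e.
   m_j = floor (x_j / delta + 1/2) *)
Definition roundoff (delta : R) (x : 'rV[R]_n) : 'rV[R]_n :=
  delta *: ivec (\row_j Num.floor (x 0 j / delta + 2^-1)).

Definition roundoff_map (delta : R) (w : 'rV[R]_n -> 'rV[R]_n) :=
  fun x => roundoff delta (w x).

Definition theta (nrm : 'rV[R]_n -> R) (delta : R) : R :=
  2^-1 * sup [set t : R | exists x y : 'rV[R]_n,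
     [/\ cube delta 0 x, cube delta 0 y & t = nrm (x - y)]].

Definition trans (N : nat) (wt : 'I_N -> 'rV[R]_n -> 'rV[R]_n)
  (p : 'I_N -> 'rV[R]_n -> R) (x y : 'rV[R]_n) : R :=
  \sum_(i < N) p i x * (wt i x == y)%:R.

Definition succs (N : nat) (wt : 'I_N -> 'rV[R]_n -> 'rV[R]_n) (y : 'rV[R]_n)
  : seq 'rV[R]_n := undup [seq wt i y | i <- enum 'I_N].

(* hitprob k y = probability that the chain started at y visits x at some
   time in {1,..,k}.  (Sums over z range over the support of trans y _.) *)
Fixpoint hitprob (N : nat) (wt : 'I_N -> 'rV[R]_n -> 'rV[R]_n)
  (p : 'I_N -> 'rV[R]_n -> R) (x : 'rV[R]_n) (k : nat) (y : 'rV[R]_n) : R :=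
  match k with
  | 0 => 0
  | k'.+1 => trans wt p y x +
       \sum_(z <- succs wt y | z != x) trans wt p y z * hitprob wt p x k' z
  end.

Definition recurrent (N : nat) (wt : 'I_N -> 'rV[R]_n -> 'rV[R]_n)
  (p : 'I_N -> 'rV[R]_n -> R) (x : 'rV[R]_n) : Prop :=
  hitprob wt p x k x @[k --> \oo] --> (1 : R).

End DIFS.

(* Main.v *)
Require Import Defs.
From HB Require Import structures.
From mathcomp Require Import all_boot all_order all_algebra.
From mathcomp Require Import all_classical all_reals all_analysis.
From mathcomp Require Import ring lra zify.
From Stdlib Require Import Classical.
Import Order.TTheory GRing.Theory Num.Theory numFieldNormedType.Exports.
Local Open Scope ring_scope.
Local Open Scope classical_set_scope.
Set Implicit Arguments. Unset Strict Implicit.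
Lemma hit_eq (R : realType) (n N : nat) (wt : 'I_N -> 'rV[R]_n -> 'rV[R]_n)
  (p : 'I_N -> 'rV[R]_n -> R) (x : 'rV[R]_n) k y :
  hitprob wt p x k.+1 y =
  \sum_(i < N) p i y * (if wt i y == x then 1 else hitprob wt p x k (wt i y)).
Proof.
rewrite /= /trans.
have inner : forall i, \sum_(z <- succs wt y | z != x)
      p i y * (wt i y == z)%:R * hitprob wt p x k z
    = p i y * ((wt i y != x)%:R * hitprob wt p x k (wt i y)).
  move=> i.
  have wi : wt i y \in succs wt y.
    by rewrite /succs mem_undup; apply/mapP; exists i; rewrite ?mem_enum.
  rewrite big_mkcond (bigD1_seq (wt i y)) ?undup_uniq //= eqxx mulr1.
  rewrite big1 ?addr0; last first.
    move=> z /negbTE zne; rewrite (eq_sym (wt i y)) zne mulr0 mul0r; by case: ifP.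
  by case: (wt i y != x); rewrite /= ?mul0r ?mul1r ?mulr0.
under eq_bigr => z _ do rewrite big_distrl /=.
rewrite exchange_big /= -big_split /=.
apply: eq_bigr => i _; rewrite inner -mulrDr.
by case: eqP => _ /=; rewrite ?mul0r ?addr0 ?mul1r ?add0r.
Qed.

Lemma hit_bounds (R : realType) (n N : nat) (wt : 'I_N -> 'rV[R]_n -> 'rV[R]_n)
  (p : 'I_N -> 'rV[R]_n -> R) (x : 'rV[R]_n) (D : 'rV[R]_n -> Prop) :
  (forall i y, D y -> D (wt i y)) ->
  (forall i y, D y -> 0 <= p i y) ->
  (forall y, D y -> \sum_(i < N) p i y = 1) ->
  forall k y, D y -> 0 <= hitprob wt p x k y <= 1.
Proof.
move=> HD Hp0 Hp1; elim=> [|k IH] y Dy; first by rewrite /= lexx ler01.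
rewrite hit_eq; apply/andP; split.
  apply: sumr_ge0 => i _; apply: mulr_ge0; first exact: Hp0.
  by case: ifP => _; [exact: ler01 | case/andP: (IH _ (HD i _ Dy))].
apply: (@le_trans _ _ (\sum_(i < N) p i y)); last by rewrite Hp1.
apply: ler_sum => i _.
rewrite -[leRHS]mulr1; apply: ler_wpM2l; first exact: Hp0.
by case: ifP => _ //; case/andP: (IH _ (HD i _ Dy)).
Qed.

Lemma hit_mono1 (R : realType) (n N : nat) (wt : 'I_N -> 'rV[R]_n -> 'rV[R]_n)
  (p : 'I_N -> 'rV[R]_n -> R) (x : 'rV[R]_n) (D : 'rV[R]_n -> Prop) :
  (forall i y, D y -> D (wt i y)) ->
  (forall i y, D y -> 0 <= p i y) ->
  (forall y, D y -> \sum_(i < N) p i y = 1) ->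
  forall k y, D y -> hitprob wt p x k y <= hitprob wt p x k.+1 y.
Proof.
move=> HD Hp0 Hp1; elim=> [|k IH] y Dy.
  by case/andP: (hit_bounds x HD Hp0 Hp1 1 Dy).
rewrite (hit_eq _ _ _ k.+1) hit_eq; apply: ler_sum => i _.
apply: ler_wpM2l; first exact: Hp0.
by case: ifP => _ //; apply: IH; apply: HD.
Qed.

Lemma hit_mono (R : realType) (n N : nat) (wt : 'I_N -> 'rV[R]_n -> 'rV[R]_n)
  (p : 'I_N -> 'rV[R]_n -> R) (x : 'rV[R]_n) (D : 'rV[R]_n -> Prop) :
  (forall i y, D y -> D (wt i y)) ->
  (forall i y, D y -> 0 <= p i y) ->
  (forall y, D y -> \sum_(i < N) p i y = 1) ->
  forall a b y, (a <= b)%N -> D y -> hitprob wt p x a y <= hitprob wt p x b y.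
Proof.
move=> HD Hp0 Hp1 a b y /subnKC <- Dy; elim: (b - a)%N => [|d IH].
  by rewrite addn0.
by rewrite addnS; apply: le_trans IH _; apply: (hit_mono1 x HD Hp0 Hp1).
Qed.

Lemma miss_eq (R : realType) (n N : nat) (wt : 'I_N -> 'rV[R]_n -> 'rV[R]_n)
  (p : 'I_N -> 'rV[R]_n -> R) (x : 'rV[R]_n) (D : 'rV[R]_n -> Prop) :
  (forall y, D y -> \sum_(i < N) p i y = 1) ->
  forall k y, D y -> 1 - hitprob wt p x k.+1 y =
    \sum_(i < N) p i y * (if wt i y == x then 0 else 1 - hitprob wt p x k (wt i y)).
Proof.
move=> Hp1 k y Dy; rewrite hit_eq -{1}(Hp1 y Dy) -sumrB; apply: eq_bigr => i _.
by case: ifP => _; rewrite ?mulr1 ?mulr0 ?subrr // mulrBr mulr1.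
Qed.

Lemma miss_step (R : realType) (n N : nat) (wt : 'I_N -> 'rV[R]_n -> 'rV[R]_n)
  (p : 'I_N -> 'rV[R]_n -> R) (x : 'rV[R]_n) (Q : 'rV[R]_n -> Prop) :
  (forall i y, Q y -> Q (wt i y)) ->
  (forall i y, Q y -> 0 <= p i y) ->
  (forall y, Q y -> \sum_(i < N) p i y = 1) ->
  forall k m, (forall z, Q z -> 1 - hitprob wt p x k z <= m) ->
  forall t y, Q y -> 1 - hitprob wt p x (t + k) y <= m * (1 - hitprob wt p x t y).
Proof.
move=> HQ Hp0 Hp1 k m Hm; elim=> [|t IH] y Qy.
  by rewrite add0n /= subr0 mulr1; apply: Hm.
rewrite addSn !(@miss_eq _ _ _ wt p x Q Hp1) // mulr_sumr; apply: ler_sum => i _.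
rewrite mulrCA; apply: ler_wpM2l; first exact: Hp0.
by case: ifP => _; rewrite ?mulr0 //; apply: IH; apply: HQ.
Qed.

Lemma miss_pow (R : realType) (n N : nat) (wt : 'I_N -> 'rV[R]_n -> 'rV[R]_n)
  (p : 'I_N -> 'rV[R]_n -> R) (x : 'rV[R]_n) (Q : 'rV[R]_n -> Prop) K q :
  (forall i y, Q y -> Q (wt i y)) ->
  (forall i y, Q y -> 0 <= p i y) ->
  (forall y, Q y -> \sum_(i < N) p i y = 1) ->
  q <= 1 ->
  (forall z, Q z -> 1 - hitprob wt p x K z <= 1 - q) ->
  forall j y, Q y -> 1 - hitprob wt p x (j * K) y <= (1 - q) ^+ j.
Proof.
move=> HQ Hp0 Hp1 q1 HK; elim=> [|j IH] y Qy.
  by rewrite mul0n /= subr0 expr0.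
rewrite mulSn.
have := @miss_step _ _ _ wt p x Q HQ Hp0 Hp1 _ _ IH K y Qy.
move/le_trans; apply.
rewrite exprSr; apply: ler_wpM2l; last exact: HK.
by apply: exprn_ge0; rewrite subr_ge0.
Qed.

Inductive reach (R : realType) (n N : nat) (wt : 'I_N -> 'rV[R]_n -> 'rV[R]_n)
  : 'rV[R]_n -> 'rV[R]_n -> Prop :=
| reach0 y : reach wt y y
| reachS i y z : reach wt (wt i y) z -> reach wt y z.

Lemma reach_trans (R : realType) (n N : nat) (wt : 'I_N -> 'rV[R]_n -> 'rV[R]_n) y z u :
  reach wt y z -> reach wt z u -> reach wt y u.
Proof.
elim=> [//|i a b _ IH] /IH; exact: reachS.
Qed.

Lemma reach_D (R : realType) (n N : nat) (wt : 'I_N -> 'rV[R]_n -> 'rV[R]_n)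
  (D : 'rV[R]_n -> Prop) :
  (forall i y, D y -> D (wt i y)) -> forall y z, reach wt y z -> D y -> D z.
Proof.
move=> HD y z; elim=> [//|i a b _ IH] Da; apply: IH; exact: HD.
Qed.

Lemma hit_pos (R : realType) (n N : nat) (wt : 'I_N -> 'rV[R]_n -> 'rV[R]_n)
  (p : 'I_N -> 'rV[R]_n -> R) (x : 'rV[R]_n) (D : 'rV[R]_n -> Prop) :
  (forall i y, D y -> D (wt i y)) ->
  (forall i y, D y -> 0 < p i y) ->
  (forall y, D y -> \sum_(i < N) p i y = 1) ->
  forall u z, reach wt u z -> z = x ->
  forall y i, D y -> u = wt i y -> exists m, 0 < hitprob wt p x m.+1 y.
Proof.
move=> HD Hp Hp1.
have Hp0 : forall i y, D y -> 0 <= p i y by move=> i y /(Hp i) /ltW.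
have single : forall m y i, D y ->
    p i y * (if wt i y == x then 1 else hitprob wt p x m (wt i y))
    <= hitprob wt p x m.+1 y.
  move=> m y i Dy; rewrite hit_eq (bigD1 i) //= lerDl.
  apply: sumr_ge0 => j _; apply: mulr_ge0; first exact: Hp0.
  by case: ifP => _; [exact: ler01 | case/andP: (hit_bounds x HD Hp0 Hp1 m (HD j _ Dy))].
move=> u z; elim=> [a|j a b _ IH] Hz y i Dy Hu.
  exists 0%N; apply: lt_le_trans (single 0%N y i Dy).
  by rewrite -Hu Hz eqxx mulr1; exact: Hp.
have Da : D a by rewrite Hu; exact: HD.
have [m Hm] := IH Hz a j Da erefl.
exists m.+1; apply: lt_le_trans (single m.+1 y i Dy).
rewrite -Hu; case: ifP => _; first by rewrite mulr1; exact: Hp.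
exact: mulr_gt0 (Hp _ _ Dy) Hm.
Qed.

Lemma reach_inv (R : realType) (n N : nat) (wt : 'I_N -> 'rV[R]_n -> 'rV[R]_n) u z :
  reach wt u z -> u = z \/ exists i, reach wt (wt i u) z.
Proof. by case=> [y|i y z' r]; [left | right; exists i]. Qed.

Lemma recurrent_of_closed (R : realType) (n N : nat) (wt : 'I_N -> 'rV[R]_n -> 'rV[R]_n)
  (p : 'I_N -> 'rV[R]_n -> R) (x : 'rV[R]_n) (D : 'rV[R]_n -> Prop) (F : seq 'rV[R]_n) :
  (forall i y, D y -> D (wt i y)) ->
  (forall i y, D y -> 0 < p i y) ->
  (forall y, D y -> \sum_(i < N) p i y = 1) ->
  D x -> (0 < N)%N ->
  (forall u, reach wt x u -> u \in F) ->
  (forall u, reach wt x u -> reach wt u x) ->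
  recurrent wt p x.
Proof.
move=> HD Hp Hp1 Dx N0 HF Hback.
have Hp0 : forall i y, D y -> 0 <= p i y by move=> i y /(Hp i) /ltW.
pose Q u := reach wt x u /\ D u.
have HQ : forall i y, Q y -> Q (wt i y).
  move=> i y [r Dy]; split; last exact: HD.
  apply: reach_trans r _; apply: (reachS (i:=i)); exact: reach0.
have Hp0Q : forall i y, Q y -> 0 <= p i y by move=> i y [_ /Hp0].
have Hp1Q : forall y, Q y -> \sum_(i < N) p i y = 1 by move=> y [_ /Hp1].
have Hpos : forall u, Q u -> exists m, 0 < hitprob wt p x m.+1 u.
  move=> u [ru Du]; have := Hback u ru.
  case: (eqVneq u x) => [-> _ | neq].
    have i0 : 'I_N := Ordinal N0.
    have rx : reach wt x (wt i0 x) by apply: (reachS (i:=i0)); exact: reach0.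
    have := Hback _ rx => r2.
    exact: (hit_pos HD Hp Hp1 r2 erefl Dx erefl).
  case/reach_inv => [ux|[i r2]]; first by rewrite ux eqxx in neq.
  exact: (hit_pos HD Hp Hp1 r2 erefl Du erefl).
have Hunif : forall s : seq 'rV[R]_n, exists K q, 0 < q /\
    forall u, u \in s -> Q u -> q <= hitprob wt p x K u.
  elim=> [|a s [K [q [q0 Hq]]]]; first by exists 0%N, 1; split.
  have [Qa|nQa] := pselect (Q a); last first.
    exists K, q; split => // u; rewrite inE => /orP[/eqP -> //|us Qu].
    exact: Hq.
  have [m Hm] := Hpos a Qa.
  exists (maxn K m.+1), (Order.min q (hitprob wt p x m.+1 a)); split.
    by rewrite lt_min q0.
  move=> u; rewrite inE => /orP[/eqP -> _|us Qu].
    rewrite ge_min; apply/orP; right.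
    apply: (hit_mono x HD Hp0 Hp1); [exact: leq_maxr | by case: Qa].
  rewrite ge_min; apply/orP; left; apply: le_trans (Hq u us Qu) _.
  apply: (hit_mono x HD Hp0 Hp1); [exact: leq_maxl | by case: Qu].
have [K [q [q0 Hq]]] := Hunif F.
have Qx : Q x by split => //; exact: reach0.
have HqK : forall z, Q z -> q <= hitprob wt p x K z.
  by move=> z Qz; apply: Hq => //; apply: HF; case: Qz.
have q1 : q <= 1.
  apply: le_trans (HqK x Qx) _; by case/andP: (hit_bounds x HD Hp0 Hp1 K Dx).
have Hmiss : forall z, Q z -> 1 - hitprob wt p x K z <= 1 - q.
  by move=> z Qz; rewrite lerD2l lerN2; exact: HqK.
have Hpow := miss_pow HQ Hp0Q Hp1Q q1 Hmiss.
apply/cvgrPdist_lt => e e0.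
have : (1 - q) ^+ j @[j --> \oo] --> (0 : R).
  apply: cvg_expr; rewrite ger0_norm ?subr_ge0 //; lra.
move/cvgrPdist_lt => /(_ e e0) [J _ HJ].
exists (J * K)%N => // k /= Hk.
have HJJ := HJ J (leqnn J); rewrite /= sub0r normrN in HJJ.
case/andP: (hit_bounds x HD Hp0 Hp1 k Dx) => h0 h1.
rewrite ger0_norm ?subr_ge0 //.
apply: le_lt_trans HJJ.
rewrite ger0_norm; last by rewrite exprn_ge0 // subr_ge0.
apply: le_trans (Hpow J x Qx).
by rewrite lerD2l lerN2; apply: (hit_mono x HD Hp0 Hp1).
Qed.

Lemma count_lt (T : eqType) (a b : pred T) (s : seq T) :
  subpred a b -> (exists2 u, u \in s & b u && ~~ a u) -> (count a s < count b s)%N.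
Proof.
move=> sab; elim: s => [[u]//|v s IH] [u]; rewrite inE => /orP[/eqP ->|us] Hu /=.
  case/andP: Hu => -> /negbTE ->; rewrite add0n add1n ltnS; exact: sub_count.
rewrite -addnS; apply: leq_add; last by apply: IH; exists u.
by case: (boolP (a v)) => // /sab ->.
Qed.

Lemma descent (R : realType) (n N : nat) (wt : 'I_N -> 'rV[R]_n -> 'rV[R]_n)
  (P : 'rV[R]_n -> Prop) (F : seq 'rV[R]_n) :
  (forall i y, P y -> P (wt i y)) -> (forall y, P y -> y \in F) ->
  forall y, P y -> exists x, reach wt y x /\ forall u, reach wt x u -> reach wt u x.
Proof.
move=> HP HF.
pose cnt y := count (fun u => `[< reach wt y u >]) F.
suff : forall k y, P y -> (cnt y <= k)%N ->
    exists x, reach wt y x /\ forall u, reach wt x u -> reach wt u x.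
  by move=> H y Py; exact: (H _ y Py (leqnn _)).
elim=> [|k IH] y Py Hc;
  (have [Hall|Hn] := pselect (forall u, reach wt y u -> reach wt u y);
    [by exists y; split => //; exact: reach0|]);
  (have [u [ryu nruy]] : exists u, reach wt y u /\ ~ reach wt u y
     by apply: NNPP => Hne; apply: Hn => u ryu; apply: NNPP => nr; apply: Hne; exists u);
  (have Hlt : (cnt u < cnt y)%N
     by apply: count_lt;
       [move=> v /asboolP ruv; apply/asboolP; exact: reach_trans ryu ruv
       |exists y; [exact: HF| apply/andP; split; [apply/asboolP; exact: reach0 | apply/negP => /asboolP]]]).
  by move: Hlt; rewrite (leqNgt _ 0) in Hc; lia.
have Pu : P u by exact: (reach_D HP ryu).
have Hcu : (cnt u <= k)%N by rewrite -ltnS; exact: leq_trans Hlt Hc.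
have [x [rux Hx]] := IH u Pu Hcu.
by exists x; split => //; exact: reach_trans ryu rux.
Qed.
Lemma nrm0 (R : realType) n (nrm : 'rV[R]_n -> R) : is_norm nrm -> nrm 0 = 0.
Proof. by case=> _ Hs _; rewrite -(scale0r 0) Hs normr0 mul0r. Qed.

Lemma nrmN (R : realType) n (nrm : 'rV[R]_n -> R) : is_norm nrm -> forall x, nrm (- x) = nrm x.
Proof. by case=> _ Hs _ x; rewrite -scaleN1r Hs normrN normr1 mul1r. Qed.

Lemma nrm_ge0 (R : realType) n (nrm : 'rV[R]_n -> R) : is_norm nrm -> forall x, 0 <= nrm x.
Proof.
move=> Hn x; have := (let: And3 _ _ Ht := Hn in Ht) x (- x).
by rewrite subrr (nrm0 Hn) (nrmN Hn); lra.
Qed.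

Lemma nrm_symB (R : realType) n (nrm : 'rV[R]_n -> R) : is_norm nrm ->
  forall x y, nrm (x - y) = nrm (y - x).
Proof. by move=> Hn x y; rewrite -(nrmN Hn) opprB. Qed.

Lemma nrm_tri (R : realType) n (nrm : 'rV[R]_n -> R) : is_norm nrm ->
  forall x y z, nrm (x - z) <= nrm (x - y) + nrm (y - z).
Proof.
by case=> _ _ Ht x y z; have := Ht (x - y) (y - z); rewrite addrA subrK.
Qed.

Lemma nrm_sum_bound (R : realType) n (nrm : 'rV[R]_n -> R) : is_norm nrm ->
  forall x, nrm x <= \sum_(j < n) `|x 0 j| * nrm 'e_j.
Proof.
move=> Hn x; rewrite {1}(row_sum_delta x).
elim/big_rec2: _ => [|j y1 y2 _ IH]; first by rewrite (nrm0 Hn).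
case: Hn => [H0 Hs Ht]; apply: le_trans (Ht _ _) _.
by rewrite Hs lerD2l.
Qed.

Lemma coord_le_mxnorm (R : realType) n (x : 'rV[R]_n) j : `|x 0 j| <= `|x|.
Proof.
rewrite [leRHS]/Num.Def.normr /= mx_normrE; apply/bigmax_geP; right => /=.
by exists (0, j).
Qed.

Lemma nrm_upper (R : realType) n (nrm : 'rV[R]_n -> R) : is_norm nrm ->
  forall x, nrm x <= (\sum_(j < n) nrm 'e_j) * `|x|.
Proof.
move=> Hn x; apply: le_trans (nrm_sum_bound Hn x) _.
rewrite mulr_suml; apply: ler_sum => j _; rewrite mulrC.
apply: ler_wpM2l; [exact: nrm_ge0 | exact: coord_le_mxnorm].
Qed.

Lemma nrm_cont (R : realType) n (nrm : 'rV[R]_n -> R) : is_norm nrm ->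
  continuous nrm.
Proof.
move=> Hn x; set C := \sum_(j < n) nrm 'e_j.
have C0 : 0 <= C by apply: sumr_ge0 => j _; exact: nrm_ge0.
apply/(@cvgrPdist_lt _ _ _ _ (nbhs_filter x)) => e e0.
have eC : 0 < e / (C + 1) by apply: divr_gt0 => //; lra.
have := nbhsx_ballx x _ eC; rewrite -ball_normE.
apply: filterS => y /= H.
have Hxy : `|nrm x - nrm y| <= nrm (x - y).
  rewrite ler_norml; apply/andP; split.
    have := nrm_tri Hn y x 0; rewrite !subr0 (nrm_symB Hn y x); lra.
  have := nrm_tri Hn x y 0; rewrite !subr0; lra.
apply: le_lt_trans Hxy _; apply: le_lt_trans (nrm_upper Hn (x - y)) _.
have : C * `|x - y| <= C * (e / (C + 1)) by apply: ler_wpM2l => //; exact: ltW.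
move/le_lt_trans; apply.
rewrite mulrA ltr_pdivrMr; last lra.
rewrite mulrDr mulr1; nra.
Qed.

Lemma nrm_lower (R : realType) n (nrm : 'rV[R]_n -> R) : is_norm nrm ->
  exists c, 0 < c /\ forall x, c * `|x| <= nrm x.
Proof.
move=> Hn; have [[v v0]|none] := pselect (exists v : 'rV[R]_n, v != 0); last first.
  exists 1; split => // x; have -> : x = 0.
    by apply/eqP; apply: contra_notT none => x0; exists x.
  by rewrite normr0 mulr0 (nrm0 Hn).
pose A := [set x : 'rV[R]_n | `|x| = 1].
have nv : `|v| != 0 by rewrite normr_eq0.
have unit : forall x : 'rV[R]_n, x != 0 -> A (`|x|^-1 *: x).
  move=> x x0; rewrite /A /= normrZ normfV normr_id mulVf //.
  by rewrite normr_eq0.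
have A0 : A !=set0 by exists (`|v|^-1 *: v); exact: unit.
have cA : compact A.
  apply: bounded_closed_compact.
    exists 1; split; first exact: num_real.
    by move=> M M1 x; rewrite /A /= => ->; exact: ltW.
  have -> : A = (fun x : 'rV[R]_n => `|x|) @^-1` [set x : R | x = 1] by [].
  by apply: (continuous_closedP _).1; [exact: norm_continuous | exact: closed_eq].
have [c0 c0A Hmin] := EVT_min_rV A0 cA (continuous_subspaceT (nrm_cont Hn)).
have c0A' : `|c0| = 1 by move: c0A; rewrite inE.
have m0 : 0 < nrm c0.
  rewrite lt_def nrm_ge0 // andbT; apply/eqP => /(let: And3 H0 _ _ := Hn in H0) c00.
  by move: c0A'; rewrite c00 normr0 => /eqP; rewrite eq_sym oner_eq0.
exists (nrm c0); split => // x.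
have [->|x0] := eqVneq x 0; first by rewrite normr0 mulr0 nrm_ge0.
have := Hmin _ (mem_set (unit x x0)).
case: Hn => [H0 Hs Ht]; rewrite Hs normfV normr_id.
have nx : 0 < `|x| by rewrite normr_gt0.
by rewrite (ler_pdivlMl _ _ nx) mulrC.
Qed.

Lemma lattice_finite (R : realType) n (delta : R) (M : nat) :
  exists F : seq 'rV[R]_n, forall m : 'rV[int]_n,
    (forall j, - (M%:Z) <= m 0 j <= M%:Z) -> delta *: ivec R m \in F.
Proof.
exists [seq delta *: ivec R (\row_j ((nat_of_ord (f j))%:Z - M%:Z) : 'rV[int]_n)
         | f : {ffun 'I_n -> 'I_(M.*2.+1)} <- enum {ffun 'I_n -> 'I_(M.*2.+1)}].
move=> m Hm; apply/mapP.
exists [ffun j => inord (absz (m 0 j + M%:Z))]; first by rewrite mem_enum.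
congr (_ *: ivec R _); apply/rowP => j; rewrite !mxE ffunE.
have := Hm j; case/andP => h1 h2.
rewrite inordK; first by lia.
lia.
Qed.

Lemma lattice_bound (R : realType) n (nrm : 'rV[R]_n -> R) (delta : R) (o : 'rV[R]_n) rho :
  is_norm nrm -> 0 < delta ->
  exists M : nat, forall m : 'rV[int]_n, nrm (o - delta *: ivec R m) < rho ->
    forall j, - (M%:Z) <= m 0 j <= M%:Z.
Proof.
move=> Hn d0; have [c [c0 Hc]] := nrm_lower Hn.
pose B := (rho + nrm o) / c / delta.
exists (Num.trunc B).+1 => m Hm j.
have H1 : `|delta *: ivec R m| <= (rho + nrm o) / c.
  rewrite ler_pdivlMr // mulrC; apply: le_trans (Hc _) _.
  have := nrm_tri Hn (delta *: ivec R m) o 0; rewrite !subr0 (nrm_symB Hn _ o); lra.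
have H2 : `|(m 0 j)%:~R : R| <= B.
  rewrite /B ler_pdivlMr // mulrC; apply: le_trans H1.
  apply: le_trans (coord_le_mxnorm _ j); rewrite !mxE normrM (gtr0_norm d0).
  by [].
have H3 := truncnS_gt B.
have : `|(m 0 j)%:~R : R| < ((Num.trunc B).+1%:Z)%:~R by rewrite -pmulrn; lra.
rewrite -intr_norm ltr_int => H4.
lia.
Qed.

Lemma cube0P (R : realType) n (delta : R) (x : 'rV[R]_n) :
  cube delta 0 x <-> forall j, - (2^-1 * delta) <= x 0 j < 2^-1 * delta.
Proof.
rewrite /cube /=; split => H j; have := H j; rewrite mxE /= sub0r add0r mulNr.
  by case=> -> ->.
by case/andP => -> ->.
Qed.

Lemma theta_sup (R : realType) n (nrm : 'rV[R]_n -> R) (delta : R) :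
  is_norm nrm -> 0 < delta ->
  has_sup [set t : R | exists x y : 'rV[R]_n,
     [/\ cube delta 0 x, cube delta 0 y & t = nrm (x - y)]].
Proof.
move=> Hn d0; split.
  exists 0, 0, 0; split; try by apply/cube0P => j; rewrite mxE; lra.
  by rewrite subr0 (nrm0 Hn).
exists (\sum_(j < n) delta * nrm 'e_j) => t [x [y [/cube0P Hx /cube0P Hy ->]]].
apply: le_trans (nrm_sum_bound Hn _) _; apply: ler_sum => j _.
apply: ler_wpM2r; first exact: nrm_ge0.
have := Hx j; have := Hy j; rewrite !mxE => /andP[? ?] /andP[? ?].
rewrite ler_norml; apply/andP; split; lra.
Qed.

Lemma theta_ge0 (R : realType) n (nrm : 'rV[R]_n -> R) (delta : R) :
  is_norm nrm -> 0 < delta -> 0 <= theta nrm delta.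
Proof.
move=> Hn d0; rewrite /theta; apply: mulr_ge0; first by rewrite invr_ge0; lra.
have [_ ub] := theta_sup Hn d0.
apply: (sup_upper_bound (theta_sup Hn d0)).
exists 0, 0; split; try by apply/cube0P => j; rewrite mxE; lra.
by rewrite subr0 (nrm0 Hn).
Qed.

Lemma roundoff_err (R : realType) n (nrm : 'rV[R]_n -> R) (delta : R) :
  is_norm nrm -> 0 < delta -> forall v, nrm (v - roundoff delta v) <= theta nrm delta.
Proof.
move=> Hn d0 v; set z := v - roundoff delta v.
have Hz : forall j, - (2^-1 * delta) <= z 0 j < 2^-1 * delta.
  move=> j; rewrite /z /roundoff !mxE.
  have := floor_itv (v 0 j / delta + 2^-1).
  set f := Num.floor _; rewrite intrD => /andP[h1 h2].
  have e1 : v 0 j = (v 0 j / delta) * delta by rewrite divfK // gt_eqF.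
  apply/andP; split; nra.
have Hs := theta_sup Hn d0.
have key : forall t, 0 <= t < 1 -> (1 + t) * nrm z <= 2 * theta nrm delta.
  move=> t /andP[t0 t1]; rewrite /theta mulrA divff ?mul1r; last by [].
  apply: (sup_upper_bound Hs); exists z, (- (t *: z)); split.
  - exact/cube0P.
  - apply/cube0P => j.
    have -> : (- (t *: z)) 0 j = - (t * z 0 j) by rewrite !mxE.
    have := Hz j; case/andP => h1 h2.
    apply/andP; split; nra.
  - case: Hn => [_ Hsc _].
    have -> : z - - (t *: z) = (1 + t) *: z by rewrite opprK scalerDl scale1r.
    rewrite Hsc.
    by rewrite ger0_norm //; lra.
have th0 := theta_ge0 Hn d0; have nz0 := nrm_ge0 Hn z.
set s := theta nrm delta in key th0 *.
have [z0|zp] := eqVneq (nrm z) 0; first by rewrite z0.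
have zpos : 0 < nrm z by rewrite lt_def zp nz0.
have [le|lt] := lerP (nrm z) s => //.
have h1 : 0 <= s / nrm z by rewrite divr_ge0.
have h2 : s / nrm z < 1 by rewrite ltr_pdivrMr // mul1r.
have := key (s / nrm z); rewrite h1 h2 /=.
have -> : (1 + s / nrm z) * nrm z = nrm z + s by rewrite mulrDl divfK // mul1r.
move=> /(_ isT); lra.
Qed.

Theorem theorem13 (R : realType) (n : nat) (delta : R) (nrm : 'rV[R]_n -> R)
  (N : nat) (w : 'I_N -> 'rV[R]_n -> 'rV[R]_n) (lam : 'I_N -> R)
  (xf : 'I_N -> 'rV[R]_n) (p : 'I_N -> 'rV[R]_n -> R) (o : 'rV[R]_n) :
  0 < delta ->
  is_norm nrm ->
  (forall i, 0 <= lam i < 1) ->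
  (forall i x y, nrm (w i x - w i y) <= lam i * nrm (x - y)) ->
  (forall i, w i (xf i) = xf i) ->
  (forall i x, discretization delta x -> 0 < p i x <= 1) ->
  (forall x, discretization delta x -> \sum_(i < N) p i x = 1) ->
  let wt := fun i => roundoff_map delta (w i) in
  let rmax := \big[Order.max/0]_(i < N) nrm (xf i - o) in
  let lmax := \big[Order.max/0]_(i < N) lam i in
  let alpha := (1 + lmax) / (1 - lmax) in
  let r := alpha * rmax + theta nrm delta / (1 - lmax) in
  let A := [set x | discretization delta x /\ recurrent wt p x] in
  (forall eps : R, 0 < eps ->
     let S := [set x | discretization delta x /\ nrm (o - x) < r + eps] in
     (forall i x, S x -> S (wt i x)) /\ A `<=` S)
  /\ A !=set0.
Proof.
move=> d0 Hn Hlam Hcon Hfix Hp Hsum wt rmax lmax alpha r A.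
have disc0 : discretization delta (delta *: ivec R (0 : 'rV[int]_n)) by exists 0.
have N0 : (0 < N)%N.
  case: (posnP N) => // NN.
  have := Hsum _ disc0; rewrite big1 => [/eqP|i _]; first by rewrite eq_sym oner_eq0.
  by have := ltn_ord i; rewrite {2}NN.
pose i0 : 'I_N := Ordinal N0.
have lam_le : forall i, lam i <= lmax by move=> i; exact: le_bigmax.
have lam0 : forall i, 0 <= lam i by move=> i; case/andP: (Hlam i).
have lmax0 : 0 <= lmax by apply: le_trans (lam0 i0) (lam_le i0).
have lmax1 : lmax < 1.
  by apply: bigmax_lt => // i _; case/andP: (Hlam i).
have rmax_le : forall i, nrm (xf i - o) <= rmax by move=> i; exact: le_bigmax.
have rmax0 : 0 <= rmax by apply: le_trans (nrm_ge0 Hn _) (rmax_le i0).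
have th0 := theta_ge0 Hn d0.
have Hr : r * (1 - lmax) = (1 + lmax) * rmax + theta nrm delta.
  by rewrite /r /alpha; field; lra.
have r0 : 0 <= r.
  rewrite /r /alpha; apply: addr_ge0; apply: mulr_ge0 => //;
    try apply: divr_ge0; try rewrite invr_ge0; lra.
have key : forall i y, nrm (o - wt i y) <= (1 - lam i) * r + lam i * nrm (o - y).
  move=> i y.
  have h1 := nrm_tri Hn o (w i y) (wt i y).
  have h2 : nrm (w i y - wt i y) <= theta nrm delta by exact: roundoff_err.
  have h3 := nrm_tri Hn o (xf i) (w i y).
  have h4 : nrm (xf i - w i y) <= lam i * nrm (xf i - y).
    by rewrite -{1}(Hfix i); exact: Hcon.
  have h5 := nrm_tri Hn (xf i) o y.
  have h6 : nrm (o - xf i) <= rmax by rewrite nrm_symB //; exact: rmax_le.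
  have h7 : lam i * nrm (xf i - y) <= lam i * (rmax + nrm (o - y)).
    apply: ler_wpM2l => //; apply: le_trans h5 _; rewrite lerD2r; exact: rmax_le.
  have h8 : 0 <= (lmax - lam i) * (r + rmax).
    by apply: mulr_ge0; [rewrite subr_ge0 | lra].
  have l1 := Hlam i.
  case/andP: l1 => l1a l1b.
  nra.
have inv : forall eps, 0 < eps -> forall i x, nrm (o - x) < r + eps ->
    nrm (o - wt i x) < r + eps.
  move=> eps e0 i x Hx; apply: le_lt_trans (key i x) _.
  have l1 := Hlam i; case/andP: l1 => l1a l1b.
  have : lam i * nrm (o - x) <= lam i * (r + eps) by apply: ler_wpM2l => //; exact: ltW.
  nra.
have discwt : forall i x, discretization delta (wt i x) by move=> i x; eexists.
split.
  move=> eps e0 S; split.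
    by move=> i x [_ Hx]; split; [exact: discwt | exact: inv].
  move=> x [Dx Hrec]; split => //.
  apply/negP => /negP; rewrite -leNgt => HD.
  set D := nrm (o - x) in HD.
  have zero : forall k y, nrm (o - y) <= D -> hitprob wt p x k y = 0.
    elim=> [//|k IH] y Hy; rewrite hit_eq big1 // => i _.
    have lt : nrm (o - wt i y) < D.
      apply: le_lt_trans (key i y) _.
      have l1 := Hlam i; case/andP: l1 => l1a l1b.
      have : lam i * nrm (o - y) <= lam i * D by apply: ler_wpM2l.
      nra.
    case: eqP => [E|_]; first by rewrite E /D ltxx in lt.
    by rewrite IH ?mulr0 // ltW.
  move/cvgrPdist_lt: Hrec => /(_ (2^-1)) [|J _ HJ]; first lra.
  have := HJ J (leqnn J); rewrite /= zero // subr0 normr1; lra.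
pose P y := discretization delta y /\ nrm (o - y) < r + 1.
have HP : forall i y, P y -> P (wt i y).
  by move=> i y [_ Hy]; split; [exact: discwt | exact: inv].
have [M HM] := @lattice_bound _ _ nrm delta o (r + 1) Hn d0.
have [F HF0] := lattice_finite n delta M.
have HF : forall y, P y -> y \in F.
  move=> y [[m ->] Hy]; apply: HF0; exact: HM.
pose y0 := roundoff delta o.
have Py0 : P y0.
  split; first by eexists.
  apply: le_lt_trans (roundoff_err Hn d0 o) _.
  have : 0 <= r * lmax by apply: mulr_ge0.
  nra.
have [x [ry0x Hback]] := descent HP HF Py0.
have Px : P x := reach_D HP ry0x Py0.
exists x; split; first by case: Px.
apply: (@recurrent_of_closed _ _ _ wt p x (discretization delta) F).
- by move=> i y _; exact: discwt.
- by move=> i y Dy; case/andP: (Hp i y Dy).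
- exact: Hsum.
- by case: Px.
- exact: N0.
- by move=> u rxu; apply: HF; exact: (reach_D HP rxu Px).
- exact: Hback.
Qed.
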